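(* Let \(P\colon\mathbb{R}^n\to\mathbb{R}^n\) be a vector field, let \(\nu,\eta\colon\mathbb{R}_+\to\mathbb{R}\) be continuous functions and \(\varepsilon\in\mathbb{R}\) a constant, and consider the second order differential equation \[\ddot x+\nu(t)\dot x+\eta(t)P(x)=\varepsilon\,\frac{d}{dt}\big[\eta(t)P(x)\big].\] If \(P\) is conservative, \(P=\nabla f\) for some function \(f\colon\mathbb{R}^n\to\mathbb{R}\), then this equation is derived from the Lagrange–d'Alembert variational principle: it is the equation of motion (forced Euler–Lagrange equation \(\frac{d}{dt}\big(\frac{\partial L}{\partial \dot x^i}\big)-\frac{\partial L}{\partial x^i}=F_i\)) of the forced time-dependent Lagrangian system with \[L(x,\dot x,t)=a(t)\tfrac12\|\dot x\|^2-b(t)f(x),\qquad F(x,\dot x,t)=\varepsilon\,a(t)\frac{d}{dt}\Big[\frac{b(t)}{a(t)}P(x)\Big],\] where \(a(t)=\exp\big(\int_0^t\nu(s)\,ds\big)\) and \(b(t)=a(t)\eta(t)\) for \(t\ge0\).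
   Context: The Lagrange–d'Alembert principle for a time-dependent Lagrangian \(L\colon TQ\times\mathbb{R}\to\mathbb{R}\) and external force \(F\) seeks curves \(\sigma\) with fixed endpoints such that \(\delta\int_a^b L(\sigma'(t),t)\,dt+\int_a^b F(\sigma'(t),t)\,\delta\sigma(t)\,dt=0\) for all variations \(\delta\sigma\) vanishing at the endpoints; its solutions satisfy the forced Euler–Lagrange equations \(\frac{d}{dt}\big(\frac{\partial L}{\partial \dot x^i}\big)-\frac{\partial L}{\partial x^i}=F_i\). *)

(* Defs.v *)
From Stdlib Require Import Reals.
From Coquelicot Require Import Coquelicot.
From mathcomp Require Import ssreflect ssrbool ssrfun eqtype ssrnat fintype bigop.

Set Implicit Arguments.
Unset Strict Implicit.

Open Scope R_scope.

Definition vec (n : nat) := 'I_n -> R.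

Definition upd {n : nat} (v : vec n) (i : 'I_n) (h : R) : vec n :=
  fun j => if j == i then h else v j.

Definition partial {n : nat} (g : vec n -> R) (v : vec n) (i : 'I_n) : R :=
  Derive (fun h => g (upd v i h)) (v i).

Definition is_gradient {n : nat} (f : vec n -> R) (P : vec n -> vec n) : Prop :=
  forall (v : vec n) (i : 'I_n), is_derive (fun h => f (upd v i h)) (v i) (P v i).

Definition sqnorm {n : nat} (v : vec n) : R :=
  \big[Rplus/0]_(i < n) (v i * v i).

Definition continuous_on_Rplus (g : R -> R) : Prop :=
  forall t, 0 <= t -> filterlim g (within (fun s => 0 <= s) (locally t)) (locally (g t)).

Definition coef_a (nu : R -> R) (t : R) : R := exp (RInt nu 0 t).
Definition coef_b (nu eta : R -> R) (t : R) : R := coef_a nu t * eta t.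

Definition Lag {n : nat} (nu eta : R -> R) (f : vec n -> R)
  (x v : vec n) (t : R) : R :=
  coef_a nu t * (1 / 2) * sqnorm v - coef_b nu eta t * f x.

Definition vel {n : nat} (x : R -> vec n) (t : R) : vec n :=
  fun i => Derive (fun s => x s i) t.

Definition force {n : nat} (nu eta : R -> R) (eps : R) (P : vec n -> vec n)
  (x : R -> vec n) (t : R) (i : 'I_n) : R :=
  eps * coef_a nu t * Derive (fun s => coef_b nu eta s / coef_a nu s * P (x s) i) t.

Definition forced_EL_at {n : nat} (nu eta : R -> R) (eps : R) (f : vec n -> R)
  (P : vec n -> vec n) (x : R -> vec n) (t : R) : Prop :=
  forall i : 'I_n,
    is_derive (fun s => partial (fun v => Lag nu eta f (x s) v s) (vel x s) i) t
      (partial (fun y => Lag nu eta f y (vel x t) t) (x t) i + force nu eta eps P x t i).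

Definition ode_at {n : nat} (nu eta : R -> R) (eps : R) (P : vec n -> vec n)
  (x : R -> vec n) (t : R) : Prop :=
  forall i : 'I_n,
    Derive (fun s => vel x s i) t + nu t * vel x t i + eta t * P (x t) i
    = eps * Derive (fun s => eta s * P (x s) i) t.

(* Main.v *)
Require Import Defs.
From Stdlib Require Import Reals Lra Psatz.
From Coquelicot Require Import Coquelicot.
From mathcomp Require Import ssreflect ssrbool ssrfun eqtype ssrnat fintype bigop.
From HB Require Import structures.
Open Scope R_scope.

HB.instance Definition _ := Monoid.isComLaw.Build R 0 Rplus (fun a b c => esym (Rplus_assoc a b c)) Rplus_comm Rplus_0_l.

Lemma sqnorm_upd_derive {n : nat} (v : vec n) (i : 'I_n) :
  is_derive (fun h => sqnorm (upd v i h)) (v i) (2 * v i).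
Proof.
  set C := \big[Rplus/0]_(j < n | j != i) (v j * v j).
  apply (is_derive_ext (fun h => h * h + C)).
  { move=> h. rewrite /sqnorm (bigD1 i) //= /upd eqxx. congr (_ + _).
    rewrite /C. apply: eq_bigr => j /negbTE ->. by []. }
  auto_derive; [done | ring].
Qed.

Lemma partial_Lag_v {n : nat} (nu eta : R -> R) (f : vec n -> R) (y v : vec n) (s : R) (i : 'I_n) :
  partial (fun w => Lag nu eta f y w s) v i = coef_a nu s * v i.
Proof.
  rewrite /partial /Lag. apply is_derive_unique.
  have H := is_derive_scal _ _ (coef_a nu s * (1/2)) _ (sqnorm_upd_derive v i).
  have H2 := is_derive_minus _ _ _ _ _ H (is_derive_const (coef_b nu eta s * f y) (v i)).
  eapply is_derive_ext; last first.
  - have -> : coef_a nu s * v i = minus (coef_a nu s * (1 / 2) * (2 * v i)) 0.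
    { rewrite /minus /plus /opp /zero /=. field. }
    exact H2.
  - move=> h /=. by rewrite /minus /plus /opp /=.
Qed.

Lemma partial_Lag_x {n : nat} (nu eta : R -> R) (f : vec n -> R) (P : vec n -> vec n)
  (y v : vec n) (s : R) (i : 'I_n) : is_gradient f P ->
  partial (fun z => Lag nu eta f z v s) y i = - (coef_b nu eta s * P y i).
Proof.
  move=> Hg. rewrite /partial /Lag. apply is_derive_unique.
  have H := is_derive_scal _ _ (coef_b nu eta s) _ (Hg y i).
  have H2 := is_derive_minus _ _ _ _ _ (is_derive_const (coef_a nu s * (1/2) * sqnorm v) (y i)) H.
  eapply is_derive_ext; last first.
  - have -> : - (coef_b nu eta s * P y i) = minus 0 (coef_b nu eta s * P y i).
    { rewrite /minus /plus /opp /zero /=. ring. }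
    exact H2.
  - move=> h /=. by rewrite /minus /plus /opp /=.
Qed.

Lemma coef_a_derive {nu : R -> R} {t : R} : continuous_on_Rplus nu -> 0 < t ->
  is_derive (coef_a nu) t (nu t * coef_a nu t).
Proof.
  move=> Hc Ht.
  set h := fun s : R => (s + Rabs s) / 2.
  have hpos : forall s, 0 <= h s.
  { move=> s; rewrite /h. have := Rle_abs (-s). rewrite Rabs_Ropp. lra. }
  have hid : forall s, 0 <= s -> h s = s.
  { move=> s Hs; rewrite /h Rabs_pos_eq //. lra. }
  set g := fun s => nu (h s).
  have hcont : forall s, continuous h s.
  { move=> s. rewrite /h. apply: continuous_mult; last by apply continuous_const.
    apply: continuous_plus; [apply continuous_id | apply continuous_Rabs]. }
  have gcont : forall s, continuous g s.
  { move=> s. rewrite /g /continuous.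
    apply: filterlim_comp; last by apply: (Hc (h s) (hpos s)).
    move=> Q HQ. have := hcont s Q. rewrite /within in HQ.
    move=> HQ'. 
    have HQ2 : locally s (fun y => 0 <= h y -> Q (h y)) by apply (hcont s (fun z => 0 <= z -> Q z)).
    apply: filter_imp HQ2 => y Hy. by apply Hy. }
  have Hint : forall b, is_RInt g 0 b (RInt g 0 b).
  { move=> b. apply: RInt_correct. apply: ex_RInt_continuous => z _. apply gcont. }
  have HR : is_derive (RInt g 0) t (g t).
  { apply: is_derive_RInt; last by apply gcont.
    apply: filter_forall => b. apply Hint. }
  have HR2 : is_derive (RInt nu 0) t (nu t).
  { apply: (is_derive_ext_loc (RInt g 0)).
    - exists (mkposreal t Ht) => s Hs. apply: RInt_ext => z Hz.
      rewrite /ball /= /AbsRing_ball /abs /minus /plus /opp /= in Hs.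
      have Hs0 : 0 < s.
      { move: Hs. rewrite /Rabs. case: Rcase_abs => Hr /= Hs'.
        - have E : (- (s + - t) < t)%R by exact Hs'. clear Hs'. lra.
        - have E : ((s + - t) >= 0)%R by exact Hr. clear Hs' Hr. lra. }
      rewrite Rmin_left in Hz; last lra.
      rewrite /g /= hid //. lra.
    - have -> : nu t = g t by rewrite /g hid //; lra. exact HR. }
  rewrite /coef_a.
  have := is_derive_comp exp (RInt nu 0) t _ _ (is_derive_exp _) HR2.
  rewrite /scal /= /mult /=. done.
Qed.

Theorem lemma7p1 (n : nat) (P : vec n -> vec n) (f : vec n -> R)
  (nu eta : R -> R) (eps : R) :
  continuous_on_Rplus nu -> continuous_on_Rplus eta ->
  is_gradient f P ->
  forall x : R -> vec n,
    (forall (s : R) (i : 'I_n), 0 < s ->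
       ex_derive (fun r => x r i) s /\ ex_derive (fun r => vel x r i) s) ->
    forall t : R, 0 < t ->
      (forced_EL_at nu eta eps f P x t <-> ode_at nu eta eps P x t).
Proof.
  move=> Hnu Heta Hg x Hx t Ht.
  have Ha := coef_a_derive Hnu Ht.
  have apos : forall s, 0 < coef_a nu s by move=> s; apply exp_pos.
  have HD : forall i : 'I_n, is_derive
      (fun s => partial (fun v => Lag nu eta f (x s) v s) (vel x s) i) t
      (nu t * coef_a nu t * vel x t i + coef_a nu t * Derive (fun s => vel x s i) t).
  { move=> i. apply: (is_derive_ext (fun s => coef_a nu s * vel x s i)).
    { move=> s. by rewrite partial_Lag_v. }
    have Hv : is_derive (fun s => vel x s i) t (Derive (fun s => vel x s i) t).
    { apply Derive_correct. by case: (Hx t i Ht). }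
    have := is_derive_mult _ _ _ _ _ Ha Hv Rmult_comm.
    by rewrite /plus /mult /=. }
  have HF : forall i : 'I_n, force nu eta eps P x t i =
      eps * coef_a nu t * Derive (fun s => eta s * P (x s) i) t.
  { move=> i. rewrite /force. congr (_ * _). apply Derive_ext => s.
    rewrite /coef_b. field. apply Rgt_not_eq, apos. }
  rewrite /forced_EL_at /ode_at. split => H i.
  - have E := is_derive_unique _ _ _ (H i).
    rewrite (is_derive_unique _ _ _ (HD i)) (partial_Lag_x nu eta f P _ _ _ _ Hg) HF /coef_b in E.
    have := apos t. move: E.
    set A := coef_a nu t. set D1 := Derive _ t. set D2 := Derive _ t.
    move=> E HA. apply (Rmult_eq_reg_l A); last lra.
    rewrite -[LHS]/(A * (D1 + nu t * vel x t i + eta t * P (x t) i)). nra.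
  - have E := H i. rewrite (partial_Lag_x nu eta f P _ _ _ _ Hg) HF /coef_b.
    have -> : - (coef_a nu t * eta t * P (x t) i) +
       eps * coef_a nu t * Derive (fun s : R => eta s * P (x s) i) t
       = nu t * coef_a nu t * vel x t i + coef_a nu t * Derive (fun s => vel x s i) t.
    { move: E. set A := coef_a nu t. set D1 := Derive _ t. set D2 := Derive _ t.
      move=> E. have -> : eps * A * D2 = A * (eps * D2) by ring. rewrite -E. ring. }
    exact: HD.
Qed.
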